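(* There exists a compact Hausdorff space $Y$ such that $\mathrm{K}_1^w(\mathbb R,Y)\setminus \mathrm{H}_1(\mathbb R,Y)\neq\emptyset$.
   Context: $\mathrm{H}_1(X,Y)$: mappings $f:X\to Y$ with $f^{-1}(V)$ an $F_\sigma$-set for every open $V\subseteq Y$. $\mathrm{K}_1^w(X,Y)$: mappings $f:X\to Y$ with $f^{-1}(V)$ a countable union of functionally closed subsets of $X$ for every functionally open $V\subseteq Y$ (functionally closed = zero set of a continuous real function; functionally open = complement of such). *)

(* Defs.v *)
From Stdlib Require Import Reals List.
Open Scope R_scope.

Record Topology (X : Type) := {
  is_open : (X -> Prop) -> Prop;
  open_full : is_open (fun _ => True);
  open_empty : is_open (fun _ => False);
  open_inter : forall U V, is_open U -> is_open V ->
                 is_open (fun x => U x /\ V x);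
  open_union : forall F : (X -> Prop) -> Prop,
                 (forall U, F U -> is_open U) ->
                 is_open (fun x => exists U, F U /\ U x)
}.
Arguments is_open {X} _ _.

Definition is_closed {X : Type} (T : Topology X) (A : X -> Prop) : Prop :=
  is_open T (fun x => ~ A x).

Definition R_open (U : R -> Prop) : Prop :=
  forall x, U x -> exists eps, eps > 0 /\ forall y, Rabs (y - x) < eps -> U y.

Lemma R_open_full : R_open (fun _ => True).
Proof. intros x _; exists 1; split; [apply Rlt_0_1 | auto]. Qed.

Lemma R_open_empty : R_open (fun _ => False).
Proof. intros x []. Qed.

Lemma R_open_inter : forall U V, R_open U -> R_open V -> R_open (fun x => U x /\ V x).
Proof.
  intros U V HU HV x [Ux Vx].
  destruct (HU x Ux) as [e1 [He1 H1]]; destruct (HV x Vx) as [e2 [He2 H2]].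
  exists (Rmin e1 e2); split.
  - apply Rmin_pos; assumption.
  - intros y Hy; split.
    + apply H1; apply Rlt_le_trans with (1 := Hy); apply Rmin_l.
    + apply H2; apply Rlt_le_trans with (1 := Hy); apply Rmin_r.
Qed.

Lemma R_open_union : forall F : (R -> Prop) -> Prop,
  (forall U, F U -> R_open U) -> R_open (fun x => exists U, F U /\ U x).
Proof.
  intros F HF x [U [FU Ux]].
  destruct (HF U FU x Ux) as [e [He H]].
  exists e; split; [assumption|]. intros y Hy; exists U; auto.
Qed.

Definition R_topology : Topology R :=
  {| is_open := R_open; open_full := R_open_full; open_empty := R_open_empty;
     open_inter := R_open_inter; open_union := R_open_union |}.

Definition continuous_map {X Y : Type} (TX : Topology X) (TY : Topology Y)
  (f : X -> Y) : Prop :=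
  forall V, is_open TY V -> is_open TX (fun x => V (f x)).

Definition functionally_closed {X : Type} (T : Topology X) (A : X -> Prop) : Prop :=
  exists g : X -> R, continuous_map T R_topology g /\ forall x, A x <-> g x = 0.

Definition functionally_open {X : Type} (T : Topology X) (A : X -> Prop) : Prop :=
  exists B, functionally_closed T B /\ forall x, A x <-> ~ B x.

Definition countable_union_of {X : Type} (P : (X -> Prop) -> Prop) (A : X -> Prop) : Prop :=
  exists C : nat -> X -> Prop, (forall n, P (C n)) /\
    forall x, A x <-> exists n, C n x.

Definition F_sigma {X : Type} (T : Topology X) (A : X -> Prop) : Prop :=
  countable_union_of (is_closed T) A.

Definition H1 {X Y : Type} (TX : Topology X) (TY : Topology Y) (f : X -> Y) : Prop :=
  forall V, is_open TY V -> F_sigma TX (fun x => V (f x)).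

Definition K1w {X Y : Type} (TX : Topology X) (TY : Topology Y) (f : X -> Y) : Prop :=
  forall V, functionally_open TY V ->
    countable_union_of (functionally_closed TX) (fun x => V (f x)).

Definition compact_space {X : Type} (T : Topology X) : Prop :=
  forall F : (X -> Prop) -> Prop,
    (forall U, F U -> is_open T U) ->
    (forall x, exists U, F U /\ U x) ->
    exists l : list (X -> Prop), (forall U, In U l -> F U) /\
      forall x, exists U, In U l /\ U x.

Definition hausdorff {X : Type} (T : Topology X) : Prop :=
  forall x y : X, x <> y -> exists U V, is_open T U /\ is_open T V /\
    U x /\ V y /\ forall z, ~ (U z /\ V z).

(* Main.v *)
Require Import Defs.
From Stdlib Require Import Reals.
From Stdlib Require Import Lra Lia List Classical ClassicalEpsilon.
From mathcomp Require Import all_boot all_order all_algebra.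
From mathcomp Require Import all_classical all_reals all_analysis borel_hierarchy.
From mathcomp Require Import Rstruct Rstruct_topology.

Module MC.
Import Order.TTheory GRing.Theory Num.Theory.
Import numFieldNormedType.Exports.
Local Open Scope classical_set_scope.

Lemma open_of (U : R -> Prop) :
  (forall x, U x -> exists eps, Rgt eps 0 /\ forall y, Rlt (Rabs (Rminus y x)) eps -> U y) ->
  open (U : set R).
Proof.
move=> HU; rewrite openE => x Ux.
have [e [e0 He]] := HU x Ux.
rewrite /interior -filter_from_ballE; exists e; first by apply/RltP.
move=> y; rewrite /ball /= => hy; apply: He.
rewrite Rabs_minus_sym; exact/RltP.
Qed.

Lemma not_fs (C : nat -> R -> Prop) :
  (forall n, forall x, ~ C n x -> exists eps, Rgt eps 0 /\ forall y, Rlt (Rabs (Rminus y x)) eps -> ~ C n y) ->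
  ~ (forall x, ~ (@rational R x) <-> exists n, C n x).
Proof.
move=> HC HA; apply: (@not_rational_Gdelta R).
exists (fun n => (fun x => ~ C n x) : set R).
  by move=> n; apply: open_of; apply: HC.
apply/seteqP; split => x /=.
  move=> rx n _ Cx; have : exists n, C n x by exists n.
  by move/HA.
move=> H; apply: contrapT => nr.
have [n Cn] := proj1 (HA x) nr.
exact: (H n I Cn).
Qed.

Definition NR (x : R) : Prop := ~ (@rational R x).
End MC.

Open Scope R_scope.

Lemma not_Fsigma_NR : ~ F_sigma R_topology MC.NR.
Proof.
  intros [C [HC HA]]. apply (MC.not_fs C).
  - intros n. exact (HC n).
  - exact HA.
Qed.

(* the topology on option R: one-point compactification of discrete R *)
Definition opt_open (U : option R -> Prop) : Prop :=
  U None -> exists l : list R, forall d, ~ U (Some d) -> In d l.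

Lemma opt_full : opt_open (fun _ => True).
Proof. intros _; exists nil; intros d H; exfalso; apply H; exact I. Qed.

Lemma opt_empty : opt_open (fun _ => False).
Proof. intros []. Qed.

Lemma opt_inter : forall U V, opt_open U -> opt_open V ->
  opt_open (fun x => U x /\ V x).
Proof.
  intros U V HU HV [UN VN].
  destruct (HU UN) as [l1 H1]; destruct (HV VN) as [l2 H2].
  exists (l1 ++ l2); intros d Hd; apply in_or_app.
  destruct (Classical_Prop.classic (U (Some d))) as [Ud|Ud].
  - right; apply H2; intro Vd; apply Hd; split; assumption.
  - left; apply H1; assumption.
Qed.

Lemma opt_union : forall F : (option R -> Prop) -> Prop,
  (forall U, F U -> opt_open U) -> opt_open (fun x => exists U, F U /\ U x).
Proof.
  intros F HF [U [FU UN]].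
  destruct (HF U FU UN) as [l Hl]; exists l; intros d Hd; apply Hl.
  intro Ud; apply Hd; exists U; split; assumption.
Qed.

Definition opt_top : Topology (option R) :=
  {| is_open := opt_open; open_full := opt_full; open_empty := opt_empty;
     open_inter := opt_inter; open_union := opt_union |}.

Lemma opt_compact : compact_space opt_top.
Proof.
  intros F HF Hcov.
  destruct (Hcov None) as [U0 [FU0 U0N]].
  destruct (HF U0 FU0 U0N) as [l Hl].
  assert (Hind : forall l' : list R, exists L, (forall U, In U L -> F U) /\
            forall d, In d l' -> exists U, In U L /\ U (Some d)).
  { induction l' as [|a l' IH].
    - exists nil; split; [intros U []| intros d []].
    - destruct IH as [L [HL1 HL2]].
      destruct (Hcov (Some a)) as [Ua [FUa Uaa]].
      exists (Ua :: L); split.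
      + intros U [<-|HU]; auto.
      + intros d [<-|Hd].
        * exists Ua; split; [left; reflexivity| assumption].
        * destruct (HL2 d Hd) as [U [HU1 HU2]]; exists U; split; [right|]; assumption. }
  destruct (Hind l) as [L [HL1 HL2]].
  exists (U0 :: L); split.
  - intros U [<-|HU]; auto.
  - intros [d|].
    + destruct (Classical_Prop.classic (U0 (Some d))) as [H|H].
      * exists U0; split; [left; reflexivity| assumption].
      * destruct (HL2 d (Hl d H)) as [U [HU1 HU2]]; exists U; split; [right|]; assumption.
    + exists U0; split; [left; reflexivity| assumption].
Qed.

Lemma opt_hausdorff : hausdorff opt_top.
Proof.
  intros [a|] [b|] Hab.
  - exists (fun z => z = Some a), (fun z => z = Some b).
    split; [intros H; discriminate|]. split; [intros H; discriminate|].
    split; [reflexivity|]. split; [reflexivity|].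
    intros z [-> H]; apply Hab; exact H.
  - exists (fun z => z = Some a), (fun z => z <> Some a).
    split; [intros H; discriminate|].
    split; [intros _; exists (a :: nil); intros d Hd; left;
            destruct (Classical_Prop.classic (a = d)) as [E|E]; [exact E| exfalso; apply Hd; intro E'; apply E; injection E'; auto]|].
    split; [reflexivity|]. split; [discriminate|].
    intros z [H1 H2]; exact (H2 H1).
  - exists (fun z => z <> Some b), (fun z => z = Some b).
    split; [intros _; exists (b :: nil); intros d Hd; left;
            destruct (Classical_Prop.classic (b = d)) as [E|E]; [exact E| exfalso; apply Hd; intro E'; apply E; injection E'; auto]|].
    split; [intros H; discriminate|].
    split; [discriminate|]. split; [reflexivity|].
    intros z [H1 H2]; exact (H1 H2).
  - exfalso; apply Hab; reflexivity.
Qed.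

Lemma cont_of (p : R -> R) : (forall x, continuity_pt p x) ->
  continuous_map R_topology R_topology p.
Proof.
  intros Hp V HV x Vx. simpl in *.
  destruct (HV (p x) Vx) as [e [He H]].
  specialize (Hp x e He). destruct Hp as [d [Hd Hd2]].
  exists d; split; [exact Hd|].
  intros y Hy. apply H.
  destruct (Req_dec y x) as [E|E].
  - subst; replace (p x - p x) with 0 by ring; rewrite Rabs_R0; exact He.
  - apply (Hd2 y). split.
    + split; [exact I| intro E'; apply E; symmetry; exact E'].
    + exact Hy.
Qed.

Lemma fin_zero : forall (l : list R) (S : R -> Prop), (forall x, S x -> In x l) ->
  exists p : R -> R, (forall x, continuity_pt p x) /\ forall x, S x <-> p x = 0.
Proof.
  induction l as [|a l IH]; intros S HS.
  - exists (fun _ => 1); split.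
    + intros x; apply continuity_pt_const; intros u v; reflexivity.
    + intros x; split; [intros Sx; destruct (HS x Sx)| intros H; lra].
  - destruct (IH (fun y => S y /\ y <> a)) as [p [Hc Hz]].
    { intros x [Sx Hx]; destruct (HS x Sx) as [E|E]; [exfalso; apply Hx; auto| exact E]. }
    destruct (Classical_Prop.classic (S a)) as [Sa|Sa].
    + exists (fun y => (y - a) * p y); split.
      * intros x; apply continuity_pt_mult; [|apply Hc].
        apply continuity_pt_minus; [exact (derivable_continuous_pt _ _ (derivable_pt_id x))| apply continuity_pt_const; intros u v; reflexivity].
      * intros x; split.
        -- intros Sx; destruct (Req_dec x a) as [E|E].
           ++ subst; ring.
           ++ rewrite (proj1 (Hz x) (conj Sx E)); ring.
        -- intros H; destruct (Rmult_integral _ _ H) as [H1|H1].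
           ++ replace x with a by lra; exact Sa.
           ++ apply (proj2 (Hz x) H1).
    + exists p; split; [exact Hc|].
      intros x; split.
      * intros Sx; apply (proj1 (Hz x)); split; [exact Sx| intros E; subst; contradiction].
      * intros H; apply (proj2 (Hz x) H).
Qed.

Lemma fin_fclosed (l : list R) (S : R -> Prop) : (forall x, S x -> In x l) ->
  functionally_closed R_topology S.
Proof.
  intros HS; destruct (fin_zero l S HS) as [p [Hc Hz]].
  exists p; split; [apply cont_of; exact Hc| exact Hz].
Qed.

Lemma arch_pos (r : R) : r <> 0 -> exists n, ~ Rabs r < / INR (S n).
Proof.
  intros Hr.
  assert (Hp : 0 < Rabs r) by (apply Rabs_pos_lt; exact Hr).
  destruct (archimed_cor1 (Rabs r) Hp) as [N [H1 H2]].
  destruct N as [|m]; [lia|].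
  exists m; lra.
Qed.

Lemma small_nz (r : R) (n : nat) : ~ Rabs r < / INR (S n) -> r <> 0.
Proof.
  intros H E; apply H; subst; rewrite Rabs_R0.
  apply Rinv_0_lt_compat; apply lt_0_INR; lia.
Qed.

Lemma cozero (p : R -> R) : (forall x, continuity_pt p x) ->
  countable_union_of (functionally_closed R_topology) (fun x => p x <> 0).
Proof.
  intros Hc.
  exists (fun n x => ~ Rabs (p x) < / INR (S n)); split.
  - intros n.
    exists (fun x => (/ INR (S n) - Rabs (p x)) + Rabs (/ INR (S n) - Rabs (p x))).
    split.
    + apply cont_of; intros x.
      assert (Hq : continuity_pt (fun x => / INR (S n) - Rabs (p x)) x).
      { apply continuity_pt_minus; [apply continuity_pt_const; intros u v; reflexivity|].
        apply (continuity_pt_comp p Rabs); [apply Hc| apply Rcontinuity_abs]. }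
      apply continuity_pt_plus; [exact Hq|].
      apply (continuity_pt_comp (fun x => / INR (S n) - Rabs (p x)) Rabs); [exact Hq| apply Rcontinuity_abs].
    + intros x; split.
      * intros H. rewrite (Rabs_left1 (/ INR (S n) - Rabs (p x))); lra.
      * intros H. destruct (Rle_dec (/ INR (S n) - Rabs (p x)) 0) as [L|L].
        -- lra.
        -- rewrite (Rabs_right (/ INR (S n) - Rabs (p x))) in H; lra.
  - intros x; split.
    + intros H; exact (arch_pos _ H).
    + intros [n Hn]; exact (small_nz _ _ Hn).
Qed.

Theorem mainTheorem3 :
  exists (Y : Type) (TY : Topology Y),
    compact_space TY /\ hausdorff TY /\
    exists f : R -> Y, K1w R_topology TY f /\ ~ H1 R_topology TY f.
Proof.
  exists (option R), opt_top; split; [exact opt_compact|]; split; [exact opt_hausdorff|].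
  exists Some; split.
  - intros V [B [[g [Hg HgB]] HVB]].
    destruct (Req_dec (g None) 0) as [G0|G0].
    +
      assert (Hl : forall n : nat, exists l : list R, forall d,
                 ~ Rabs (g (Some d)) < / INR (S n) -> In d l).
      { intros n.
        assert (Ho : R_open (fun r => Rabs r < / INR (S n))).
        { intros r Hr. exists (/ INR (S n) - Rabs r); split; [lra|].
          intros y Hy. pose proof (Rabs_triang_inv y r). lra. }
        apply (Hg _ Ho). change (Rabs (g None) < / INR (S n)). rewrite G0 Rabs_R0.
        apply Rinv_0_lt_compat; apply lt_0_INR; lia. }
      pose (L := fun n => proj1_sig (ClassicalEpsilon.constructive_indefinite_description _ (Hl n))).
      assert (HL : forall n d, ~ Rabs (g (Some d)) < / INR (S n) -> In d (L n)).
      { intros n; exact (proj2_sig (ClassicalEpsilon.constructive_indefinite_description _ (Hl n))). }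
      exists (fun n x => ~ Rabs (g (Some x)) < / INR (S n)); split.
      * intros n; apply (fin_fclosed (L n)); apply HL.
      * intros x; rewrite HVB HgB; split.
        -- intros H; exact (arch_pos _ H).
        -- intros [n Hn]; exact (small_nz _ _ Hn).
    + assert (Ho : R_open (fun r => r <> 0)).
      { intros r Hr. exists (Rabs r); split; [apply Rabs_pos_lt; exact Hr|].
        intros y Hy E; subst. rewrite Rminus_0_l Rabs_Ropp in Hy; lra. }
      destruct (Hg _ Ho G0) as [l Hl].
      destruct (fin_zero l (fun x => g (Some x) = 0)) as [p [Hc Hz]].
      { intros x Hx; apply Hl; intro H; exact (H Hx). }
      destruct (cozero p Hc) as [C [HC HCe]].
      exists C; split; [exact HC|].
      intros x; rewrite HVB HgB -HCe.
      split; intros H1 H2; apply H1; apply Hz; exact H2.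
  - intros HH.
    apply not_Fsigma_NR.
    destruct (HH (fun y => match y with Some x => MC.NR x | None => False end)) as [C [HC HCe]].
    + intros [].
    + exists C; split; [exact HC| exact HCe].
Qed.
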